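(* Assume the continuity assumption holds and let $\lambda^*$ be a minimizer of $\lambda\mapsto\sum_{s\in\{-1,1\}}\mathbb{E}[\max_{k\in[K]}(\pi_s p_k(X,s)-s\lambda_k)\mid S=s]$ over $\mathbb{R}^K$. Then any classifier $g$ satisfying $$g(x,s)\in\arg\max_{k\in[K]}\big(\pi_s p_k(x,s)-s\lambda^*_k\big)\quad\text{for all }(x,s)\in\mathcal{X}\times\{-1,1\}$$ is exactly fair and minimizes $\mathcal{R}$ over $\mathcal{G}_{\rm fair}$, i.e. it is an optimal exactly fair classifier.
   Context: $(X,S,Y)$ is a random triple with distribution $\mathbb{P}$, where $X\in\mathcal{X}\subset\mathbb{R}^d$, $S\in\{-1,1\}$ and $Y\in[K]=\{1,\dots,K\}$. Let $\pi_s=\mathbb{P}(S=s)$, assumed $>0$ for both $s$, and $p_k(x,s)=\mathbb{P}(Y=k\mid X=x,S=s)$. A classifier is a measurable map $g:\mathcal{X}\times\{-1,1\}\to[K]$; the risk is $\mathcal{R}(g)=\mathbb{P}(g(X,S)\neq Y)$. $g$ is exactly fair ($g\in\mathcal{G}_{\rm fair}$) if $\mathbb{P}(g(X,S)=k\mid S=1)=\mathbb{P}(g(X,S)=k\mid S=-1)$ for all $k\in[K]$. Continuity assumption: for all $k\neq j$ in $[K]$ and $s\in\{-1,1\}$, the map $t\mapsto\mathbb{P}(p_k(X,S)-p_j(X,S)\le t\mid S=s)$ is continuous. *)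

(* Defs.v *)
From HB Require Import structures.
From mathcomp Require Import all_boot all_order all_algebra.
From mathcomp Require Import all_classical all_reals all_analysis.
Set Implicit Arguments. Unset Strict Implicit. Unset Printing Implicit Defensive.
Import Order.TTheory GRing.Theory Num.Theory.
Import numFieldNormedType.Exports.
Local Open Scope classical_set_scope.
Local Open Scope ring_scope.

Section FairDefs.
Context {d d' : measure_display} {Omega : measurableType d} {T : measurableType d'}
  {R : realType} (P : probability Omega R) {K : nat}.

(* the sensitive attribute s in {-1,1} is encoded by a boolean: true = 1, false = -1 *)
Definition sgnb (b : bool) : R := if b then 1 else -1.

Definition prob (A : set Omega) : R := fine (P A).

Definition pi_s (S : Omega -> bool) (b : bool) : R := prob [set w | S w = b].

Definition condprob (S : Omega -> bool) (A : set Omega) (b : bool) : R :=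
  prob (A `&` [set w | S w = b]) / pi_s S b.

Definition condexp (S : Omega -> bool) (f : Omega -> R) (b : bool) : R :=
  fine (\int[P]_(w in [set w | S w = b]) (f w)%:E) / pi_s S b.

(* p is a version of the conditional probabilities p_k(x,s) = P(Y = k | X = x, S = s):
   measurable in x, valued in [0,1], and satisfying the defining identity
   P(Y = k, S = s, X in A) = E[p_k(X,s) 1_{S = s, X in A}] for all measurable A. *)
Definition is_cond_prob (X : Omega -> T) (S : Omega -> bool) (Y : Omega -> 'I_K)
  (p : 'I_K -> T -> bool -> R) : Prop :=
  forall (k : 'I_K) (b : bool),
    measurable_fun setT (fun x => p k x b) /\
    (forall x, 0 <= p k x b <= 1) /\
    (forall A : set T, measurable A ->
      (P [set w | Y w = k /\ S w = b /\ A (X w)] =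
      \int[P]_(w in [set w | S w = b /\ A (X w)]) (p k (X w) b)%:E)%E).

Definition continuity_assumption (X : Omega -> T) (S : Omega -> bool)
  (p : 'I_K -> T -> bool -> R) : Prop :=
  forall (k j : 'I_K) (b : bool), k != j ->
    continuous (fun t : R =>
      condprob S [set w | p k (X w) (S w) - p j (X w) (S w) <= t] b).

(* a classifier is a measurable map X x {-1,1} -> [K] (both finite sets discrete) *)
Definition is_classifier (g : T -> bool -> 'I_K) : Prop :=
  forall (k : 'I_K) (b : bool), measurable [set x | g x b = k].

Definition risk (X : Omega -> T) (S : Omega -> bool) (Y : Omega -> 'I_K)
  (g : T -> bool -> 'I_K) : R :=
  prob [set w | g (X w) (S w) <> Y w].

Definition exactly_fair (X : Omega -> T) (S : Omega -> bool) (g : T -> bool -> 'I_K) : Prop :=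
  forall k : 'I_K,
    condprob S [set w | g (X w) (S w) = k] true =
    condprob S [set w | g (X w) (S w) = k] false.

Definition maxK (f : 'I_K -> R) : R := fine (\big[maxe/-oo%E]_(k < K) (f k)%:E).

Definition score (S : Omega -> bool) (p : 'I_K -> T -> bool -> R) (lam : 'I_K -> R)
  (x : T) (b : bool) (k : 'I_K) : R :=
  pi_s S b * p k x b - sgnb b * lam k.

Definition dual_obj (X : Omega -> T) (S : Omega -> bool) (p : 'I_K -> T -> bool -> R)
  (lam : 'I_K -> R) : R :=
  condexp S (fun w => maxK (score S p lam (X w) true)) true +
  condexp S (fun w => maxK (score S p lam (X w) false)) false.

End FairDefs.

(* Main.v *)
Require Import Defs.
From HB Require Import structures.
From mathcomp Require Import all_boot all_order all_algebra.
From mathcomp Require Import all_classical all_reals all_analysis.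
From mathcomp Require Import measurable_realfun.
From mathcomp Require Import ring lra.
Import Order.TTheory GRing.Theory Num.Theory.
Import numFieldNormedType.Exports.
Local Open Scope classical_set_scope.
Local Open Scope ring_scope.

Section MaxK.
Context {R : realType} {K : nat}.

Lemma maxKE (f : 'I_K -> R) (i0 : 'I_K) :
  maxK f = \big[Num.max/f i0]_(k < K) f k.
Proof.
rewrite /maxK.
have -> : (\big[maxe/-oo%E]_(k < K) (f k)%:E)
        = (\big[maxe/(f i0)%:E]_(k < K) (f k)%:E).
  apply/le_anti/andP; split.
    apply/bigmax_leP; split => //; first by rewrite leNye.
    by move=> i _; exact: le_bigmax.
  apply/bigmax_leP; split => //; first exact: le_bigmax.
  by move=> i _; exact: le_bigmax.
by rewrite -(big_morph EFin (fun x y => EFin_max x y) (erefl (f i0)%:E)).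
Qed.

Lemma maxK_ge (f : 'I_K -> R) k : f k <= maxK f.
Proof. by rewrite (maxKE f k); exact: le_bigmax. Qed.

Lemma maxK_le (f : 'I_K -> R) (c : R) (i0 : 'I_K) :
  (forall k, f k <= c) -> maxK f <= c.
Proof. by move=> H; rewrite (maxKE f i0); apply/bigmax_leP; split. Qed.

Lemma maxK_eq (f : 'I_K -> R) j : (forall k, f k <= f j) -> maxK f = f j.
Proof. by move=> H; apply/le_anti; rewrite maxK_ge maxK_le. Qed.

Definition Ncnt (s : 'I_K -> R) (t : R) : R :=
  \sum_i \sum_(j | j != i) ((0 <= s i - s j) && (s i - s j <= t))%:R.

Lemma Ncnt_ge0 s t : 0 <= Ncnt s t.
Proof. by apply: sumr_ge0 => i _; apply: sumr_ge0 => j _; exact: ler0n. Qed.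

Lemma Ncnt_ge1 s t i j : j != i -> 0 <= s i - s j -> s i - s j <= t ->
  1 <= Ncnt s t.
Proof.
move=> ji h1 h2; rewrite /Ncnt (bigD1 i) //= (bigD1 j) //= h1 h2 /=.
rewrite -addrA ler_wpDr //; apply: addr_ge0.
  by apply: sumr_ge0 => l _; exact: ler0n.
by apply: sumr_ge0 => l _; apply: sumr_ge0 => l' _; exact: ler0n.
Qed.

Lemma pert_down (s : 'I_K -> R) (j0 k : 'I_K) (t : R) : 0 <= t ->
  (forall j, s j <= s j0) ->
  maxK (fun j => s j - (if j == k then t else 0)) <=
  maxK s - t * (j0 == k)%:R + t * Ncnt s t.
Proof.
move=> t0 hs; rewrite (maxK_eq s j0 hs).
have hN := Ncnt_ge0 s t.
have le0 : forall j, s j - (if j == k then t else 0) <= s j0.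
  by move=> j; rewrite (le_trans _ (hs j)) // lerBlDr lerDl; case: ifP.
have [jk|jk] := eqVneq j0 k; last first.
  rewrite mulr0 subr0; apply: (maxK_le _ _ j0) => j.
  by rewrite (le_trans (le0 j)) // lerDl mulr_ge0.
subst j0; rewrite mulr1.
have [[j [jk hj]]|none] := pselect (exists j, j != k /\ s k - s j <= t).
  apply: (maxK_le _ _ k) => l; rewrite (le_trans (le0 l)) //.
  have h0 : 0 <= s k - s j by rewrite subr_ge0.
  have h1 := Ncnt_ge1 s t k j jk h0 hj.
  by rewrite -addrA lerDl addrC subr_ge0 -{1}(mulr1 t) ler_wpM2l.
apply: (maxK_le _ _ k) => l; rewrite (@le_trans _ _ (s k - t)) //; last first.
  by rewrite lerDl mulr_ge0.
have [->|lk] := eqVneq l k; first by rewrite ?eqxx.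
rewrite subr0 lerBrDr -lerBrDl; apply/ltW.
by rewrite ltNge; apply/negP => h; apply: none; exists l; split.
Qed.

Lemma pert_up (s : 'I_K -> R) (j0 k : 'I_K) (t : R) : 0 <= t ->
  (forall j, s j <= s j0) ->
  maxK (fun j => s j + (if j == k then t else 0)) <=
  maxK s + t * (j0 == k)%:R + t * Ncnt s t.
Proof.
move=> t0 hs; rewrite (maxK_eq s j0 hs).
have hN := Ncnt_ge0 s t.
have le1 : forall j, s j + (if j == k then t else 0) <= s j0 + t.
  by move=> j; apply: lerD => //; case: ifP.
have [jk|jk] := eqVneq j0 k.
  subst j0; rewrite mulr1; apply: (maxK_le _ _ k) => j.
  by rewrite (le_trans (le1 j)) // lerDl mulr_ge0.
rewrite mulr0 addr0.
have [hk|hk] := leP (s k + t) (s j0).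
  apply: (maxK_le _ _ k) => j; rewrite (@le_trans _ _ (s j0)) //; last first.
    by rewrite lerDl mulr_ge0.
  have [->|jk'] := eqVneq j k; first by rewrite ?eqxx.
  by rewrite ?addr0.
have h1 : 1 <= Ncnt s t.
  apply: (Ncnt_ge1 s t j0 k); first by rewrite eq_sym.
    by rewrite subr_ge0.
  by lra.
apply: (maxK_le _ _ k) => j; rewrite (le_trans (le1 j)) // lerD2l.
by rewrite -{1}(mulr1 t) ler_wpM2l.
Qed.

End MaxK.

Section BM.
Context {d : measure_display} {Omega : measurableType d} {R : realType}
  (P : probability Omega R).

Definition bm (f : Omega -> R) :=
  measurable_fun setT f /\ exists M : R, forall w, `|f w| <= M.

Lemma bm_int (D : set Omega) f : measurable D -> bm f ->
  P.-integrable D (EFin \o f).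
Proof.
move=> mD [mf [M hM]]; apply/integrableP; split.
  by apply/measurable_EFinP; exact: measurable_funS mf.
apply: (@le_lt_trans _ _ (`|M|%:E * P D)%E).
  apply: integral_le_bound => //.
  - by apply/measurable_EFinP; exact: measurable_funS mf.
  - apply: aeW => w _ /=; rewrite lee_fin (le_trans (hM w))//.
    exact: ler_norm.
apply: lte_mul_pinfty => //.
by rewrite (le_lt_trans (probability_le1 P mD)) ?ltry.
Qed.

Lemma bm_cst (c : R) : bm (fun _ => c).
Proof. by split; [exact: measurable_cst | exists `|c|]. Qed.

Lemma bm_add f g : bm f -> bm g -> bm (fun w => f w + g w).
Proof.
move=> [mf [M hM]] [mg [N hN]]; split; first exact: measurable_funD.
by exists (M + N) => w; rewrite (le_trans (ler_normD _ _))// lerD.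
Qed.

Lemma bm_scale (c : R) {f} : bm f -> bm (fun w => c * f w).
Proof.
move=> [mf [M hM]]; split; first exact: measurable_funM.
by exists (`|c| * M) => w; rewrite normrM ler_wpM2l.
Qed.

Lemma bm_opp f : bm f -> bm (fun w => - f w).
Proof.
move=> h; have := bm_scale (-1) h.
by congr bm; apply/funext => w; rewrite mulN1r.
Qed.

Lemma bm_sub f g : bm f -> bm g -> bm (fun w => f w - g w).
Proof. by move=> hf hg; apply: bm_add => //; exact: bm_opp. Qed.

Lemma bm_indic (A : set Omega) : measurable A -> bm (fun w => \1_A w).
Proof.
move=> mA; split; first exact: measurable_indic.
by exists 1 => w; rewrite /indic; case: (w \in A); rewrite ?normr1 ?normr0.
Qed.

Lemma bm_sum (I : Type) (s : seq I) (Q : pred I) (h : I -> Omega -> R) :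
  (forall i, bm (h i)) -> bm (fun w => \sum_(i <- s | Q i) h i w).
Proof.
move=> hh; elim: s => [|i s IH].
  by under eq_fun do rewrite big_nil; exact: bm_cst.
under eq_fun do rewrite big_cons.
case: (Q i) => //; exact: bm_add.
Qed.

Lemma bm_bigmax (I : Type) (s : seq I) (h0 : Omega -> R) (h : I -> Omega -> R) :
  bm h0 -> (forall i, bm (h i)) ->
  bm (fun w => \big[Num.max/h0 w]_(i <- s) h i w).
Proof.
move=> h0b hh; elim: s => [|i s IH].
  by under eq_fun do rewrite big_nil.
under eq_fun do rewrite big_cons.
have [mi [M hM]] := hh i; have [ms [N hN]] := IH; split.
  exact: (measurable_maxr mi ms).
exists (M + `|N|) => w; rewrite /Num.max; case: ifP => _.
  by rewrite (le_trans (hN w))// ler_wpDl ?ler_norm// (le_trans _ (hM w)).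
by rewrite (le_trans (hM w))// lerDl.
Qed.

Lemma bm_maxK (K : nat) (i0 : 'I_K) (h : 'I_K -> Omega -> R) :
  (forall i, bm (h i)) -> bm (fun w => maxK (fun k => h k w)).
Proof.
move=> hh; under eq_fun do rewrite (maxKE _ i0).
exact: bm_bigmax.
Qed.

Notation E D f := (Rintegral P D f).

Lemma ED (D : set Omega) f g : measurable D -> bm f -> bm g ->
  E D (fun w => f w + g w) = E D f + E D g.
Proof. by move=> mD hf hg; apply: RintegralD => //; exact: bm_int. Qed.

Lemma EZ (D : set Omega) (c : R) f : measurable D -> bm f ->
  E D (fun w => c * f w) = c * E D f.
Proof. by move=> mD hf; apply: RintegralZl => //; exact: bm_int. Qed.

Lemma Ele (D : set Omega) f g : measurable D -> bm f -> bm g ->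
  (forall w, D w -> f w <= g w) -> E D f <= E D g.
Proof. by move=> mD hf hg H; apply: le_Rintegral => //; exact: bm_int. Qed.

Lemma Ecst (D : set Omega) (c : R) : measurable D ->
  E D (fun _ => c) = c * fine (P D).
Proof. by move=> mD; rewrite Rintegral_cst. Qed.

Lemma Eindic (D A : set Omega) : measurable D -> measurable A ->
  E D (fun w => \1_A w) = fine (P (A `&` D)).
Proof. by move=> mD mA; rewrite /Rintegral integral_indic. Qed.

Lemma Esum (D : set Omega) (I : Type) (s : seq I) (Q : pred I) (h : I -> Omega -> R) :
  measurable D -> (forall i, bm (h i)) ->
  E D (fun w => \sum_(i <- s | Q i) h i w) = \sum_(i <- s | Q i) E D (h i).
Proof.
move=> mD hh; elim: s => [|i s IH].
  under eq_Rintegral do rewrite big_nil.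
  by rewrite big_nil Rintegral_cst // mul0r.
under eq_Rintegral do rewrite big_cons.
rewrite big_cons; case: (Q i) => //.
by rewrite ED //; [rewrite IH | exact: bm_sum].
Qed.

End BM.

Lemma cont_delta {R : realType} (F : R -> R) (u e : R) :
  {for u, continuous F} -> 0 < e ->
  exists2 dl, 0 < dl & forall s, `|u - s| < dl -> `|F u - F s| < e.
Proof.
move=> /cvgrPdist_lt /(_ e) H he; have := H he.
move=> /nbhs_ballP [dl dl0 Hd]; exists dl => // s hs; exact: Hd.
Qed.

Section Main.
Context {d d' : measure_display} {Omega : measurableType d}
  {T : measurableType d'} {R : realType} (P : probability Omega R) {K : nat}
  (X : Omega -> T) (S : Omega -> bool) (Y : Omega -> 'I_K)
  (p : 'I_K -> T -> bool -> R).
Context (mX : measurable_fun setT X)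
  (mS : forall b : bool, measurable [set w | S w = b])
  (mY : forall k : 'I_K, measurable [set w | Y w = k])
  (pipos : forall b : bool, 0 < pi_s P S b)
  (hcp : is_cond_prob P X S Y p) (i0 : 'I_K).

Local Notation B c := [set w | S w = c].
Local Notation pic c := (pi_s P S c).
Local Notation E D f := (Rintegral P D f).
Local Notation sc lam c k w := (score P S p lam (X w) c k).

Lemma mpre (A : set T) : measurable A -> measurable [set w | A (X w)].
Proof. by move=> mA; have := mX measurableT _ mA; rewrite setTI. Qed.

Lemma bm_p k c : bm (fun w => p k (X w) c).
Proof.
have [mp [hb _]] := hcp k c; split.
  exact: (measurableT_comp mp mX).
exists 1 => w; have /andP[h0 h1] := hb (X w).
by rewrite ger0_norm.
Qed.

Lemma bm_sc lam c k : bm (fun w => sc lam c k w).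
Proof.
rewrite /score; apply: bm_sub; last exact: bm_cst.
exact: bm_scale (bm_p k c).
Qed.

Lemma bm_M lam c : bm (fun w => maxK (score P S p lam (X w) c)).
Proof. have H := @bm_maxK _ _ _ K i0 (fun k w => sc lam c k w) (fun k => bm_sc lam c k). exact: H. Qed.

Lemma mle (f : Omega -> R) (t : R) : bm f -> measurable [set w | f w <= t].
Proof.
move=> [mf _]; have := mf measurableT _ (measurable_itv `]-oo, t]).
rewrite setTI; congr measurable; apply/seteqP; split => w /=;
  by rewrite in_itv /=.
Qed.

Lemma mge (f : Omega -> R) (t : R) : bm f -> measurable [set w | t <= f w].
Proof.
move=> [mf _]; have := mf measurableT _ (measurable_itv `[t, +oo[).
rewrite setTI; congr measurable; apply/seteqP; split => w /=;
  by rewrite in_itv /= andbT.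
Qed.

Lemma E_restrict (D Q : set Omega) (f : Omega -> R) :
  E D (fun w => \1_Q w * f w) = E (D `&` Q) f.
Proof.
rewrite Rintegral_mkcondr; apply: eq_Rintegral => w _.
by rewrite /restrict /indic; case: (w \in Q); rewrite ?mul1r ?mul0r.
Qed.

Lemma bm_indicM (Q : set Omega) (f : Omega -> R) : measurable Q -> bm f ->
  bm (fun w => \1_Q w * f w).
Proof.
move=> mQ [mf [M hM]]; split.
  by apply: measurable_funM => //; exact: measurable_indic.
exists `|M| => w; rewrite normrM /indic; case: (w \in Q) => /=.
  by rewrite normr1 mul1r (le_trans (hM w)) ?ler_norm.
by rewrite normr0 mul0r.
Qed.

Lemma indic1 (A : set Omega) w : A w -> \1_A w = 1 :> R.
Proof. by move=> Aw; rewrite indicE mem_set. Qed.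

Lemma indic0' (A : set Omega) w : ~ A w -> \1_A w = 0 :> R.
Proof. by move=> Aw; rewrite indicE memNset. Qed.

Lemma indic_iff (A A' : set Omega) w : (A w <-> A' w) -> \1_A w = \1_A' w :> R.
Proof.
move=> H; have [Aw|Aw] := pselect (A w).
  by rewrite !indic1 //; apply/H.
by rewrite !indic0' // => /H.
Qed.

Local Notation Hk h k c := [set w | h (X w) c = k].

Lemma mHk (h : T -> bool -> 'I_K) k c : is_classifier h -> measurable (Hk h k c).
Proof. by move=> hc; have := @mpre [set x | h x c = k] (hc k c). Qed.

Lemma sum_pick (h : T -> bool -> 'I_K) c w (F : 'I_K -> R) :
  \sum_k \1_(Hk h k c) w * F k = F (h (X w) c).
Proof.
rewrite (bigD1 (h (X w) c)) //= indic1 // mul1r big1 ?addr0 // => i hi.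
by rewrite indic0' ?mul0r // => /= e; move: hi; rewrite e eqxx.
Qed.

Definition Qc (h : T -> bool -> 'I_K) c :=
  \sum_k fine (P ([set w | Y w = k] `&` (B c `&` Hk h k c))).
Definition qc (h : T -> bool -> 'I_K) c k := fine (P (B c `&` Hk h k c)).

Lemma Vc_eq (h : T -> bool -> 'I_K) lam c : is_classifier h ->
  E (B c) (fun w => sc lam c (h (X w) c) w) =
  pic c * Qc h c - sgnb c * \sum_k lam k * qc h c k.
Proof.
move=> hc.
have -> : E (B c) (fun w => sc lam c (h (X w) c) w) =
    E (B c) (fun w => \sum_k \1_(Hk h k c) w * sc lam c k w).
  by apply: eq_Rintegral => w _; rewrite sum_pick.
rewrite Esum //; last by move=> k; apply: bm_indicM; [exact: mHk | exact: bm_sc].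
have -> : \sum_k E (B c) (fun w => \1_(Hk h k c) w * sc lam c k w) =
   \sum_k (pic c * E (B c `&` Hk h k c) (fun w => p k (X w) c)
           - sgnb c * (lam k * qc h c k)).
  apply: eq_bigr => k _; rewrite E_restrict /score.
  have mBH : measurable (B c `&` Hk h k c) by apply: measurableI => //; exact: mHk.
  under eq_Rintegral do rewrite -mulNr.
  rewrite ED //; last by exact: bm_cst.
    by rewrite EZ // ?Ecst // ?mulNr ?mulrA //; exact: bm_p.
  by apply: bm_scale; exact: bm_p.
rewrite sumrB -mulr_sumr -mulr_sumr; congr (_ * _ - _).
apply: eq_bigr => k _.
have [_ [_ Hi]] := hcp k c.
by rewrite /Rintegral -(Hi _ (hc k c)).
Qed.

Lemma risk_eq (h : T -> bool -> 'I_K) : is_classifier h ->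
  risk P X S Y h = 1 - (Qc h true + Qc h false).
Proof.
move=> hc.
have mEq c : measurable [set w | h (X w) c = Y w].
  have -> : [set w | h (X w) c = Y w] = \bigcup_(k in [set: 'I_K]) (Hk h k c `&` [set w | Y w = k]).
    apply/seteqP; split => w /=.
      by move=> e; exists (Y w) => //.
    by move=> [k _ [/= -> ->]].
  by apply: fin_bigcup_measurable => // k _; apply: measurableI => //; exact: mHk.
have mEq' : measurable [set w | h (X w) (S w) = Y w].
  have -> : [set w | h (X w) (S w) = Y w] =
     (B true `&` [set w | h (X w) true = Y w]) `|` (B false `&` [set w | h (X w) false = Y w]).
    apply/seteqP; split => w /=.
      by case E1: (S w) => e; [left|right].
    by move=> [[-> e]|[-> e]].
  by apply: measurableU; apply: measurableI.
have mNeq : measurable [set w | h (X w) (S w) <> Y w].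
  have -> : [set w | h (X w) (S w) <> Y w] = ~` [set w | h (X w) (S w) = Y w] by [].
  exact: measurableC.
rewrite /risk /prob.
have -> : fine (P [set w | h (X w) (S w) <> Y w]) =
    E setT (fun w => \1_[set w | h (X w) (S w) <> Y w] w).
  by rewrite Eindic // setIT.
have -> : E setT (fun w => \1_[set w | h (X w) (S w) <> Y w] w) =
   E setT (fun w => 1 + (-1) * \1_[set w | h (X w) (S w) = Y w] w).
  apply: eq_Rintegral => w _.
  have [e|e] := pselect (h (X w) (S w) = Y w).
    rewrite (@indic0' [set w | h (X w) (S w) <> Y w]); last by move=> /(_ e).
    by rewrite (@indic1 [set w | h (X w) (S w) = Y w]) // mulr1 subrr.
  rewrite (@indic1 [set w | h (X w) (S w) <> Y w]) //.
  by rewrite (@indic0' [set w | h (X w) (S w) = Y w]) // mulr0 addr0.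
rewrite ED //; [|exact: bm_cst|by apply: bm_scale; exact: bm_indic].
rewrite EZ //; last exact: bm_indic.
rewrite Ecst // probability_setT mul1r mulN1r; congr (_ - _).
have -> : E setT (fun w => \1_[set w | h (X w) (S w) = Y w] w) =
  E setT (fun w => \1_(B true) w * \1_[set w | h (X w) (S w) = Y w] w +
                   \1_(B false) w * \1_[set w | h (X w) (S w) = Y w] w).
  apply: eq_Rintegral => w _; case E1: (S w).
    rewrite (@indic1 (B true)) /=; last by rewrite E1.
    by rewrite (@indic0' (B false)) /= ?E1 // mul1r mul0r addr0.
  rewrite (@indic1 (B false)) /=; last by rewrite E1.
  by rewrite (@indic0' (B true)) /= ?E1 // mul1r mul0r add0r.
rewrite ED //; try by apply: bm_indicM => //; exact: bm_indic.
rewrite !E_restrict !setTI.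
have key c : E (B c) (fun w => \1_[set w | h (X w) (S w) = Y w] w) = Qc h c.
  have -> : E (B c) (fun w => \1_[set w | h (X w) (S w) = Y w] w) =
      E (B c) (fun w => \sum_k \1_(Hk h k c) w * \1_[set w | Y w = k] w).
    apply: eq_Rintegral => w; rewrite inE /= => Sw.
    rewrite sum_pick; apply: indic_iff => /=; rewrite Sw; by split => ->.
  rewrite (Esum P (B c) _ (index_enum 'I_K) (fun _ => true)
     (fun k w => \1_(Hk h k c) w * \1_[set w | Y w = k] w)) //; last first.
    by move=> k; apply: bm_indicM; [exact: mHk|exact: bm_indic].
  apply: eq_bigr => k _; rewrite E_restrict Eindic //.
  by apply: measurableI => //; exact: mHk.
by rewrite !key.
Qed.

Lemma alg_step (a c x x' y y' pi pi' t : R) : 0 < t ->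
  a / pi + c / pi' <= (a - t * x + t * y) / pi + (c + t * x' + t * y') / pi' ->
  x / pi <= x' / pi' + (y / pi + y' / pi').
Proof.
move=> t0 H.
have e1 : (a - t * x + t * y) / pi = a / pi - t * (x / pi) + t * (y / pi).
  by rewrite !mulrDl mulNr !mulrA.
have e2 : (c + t * x' + t * y') / pi' = c / pi' + t * (x' / pi') + t * (y' / pi').
  by rewrite !mulrDl !mulrA.
rewrite e1 e2 in H; move: H.
move: (a / pi) (c / pi') (x / pi) (x' / pi') (y / pi) (y' / pi') => A C X1 X2 Y1 Y2 H.
nra.
Qed.

Definition lamp (lam : 'I_K -> R) (k : 'I_K) (sg t : R) : 'I_K -> R :=
  fun j => lam j + (if j == k then sg * t else 0).

Lemma sc_down lam k b t w j :
  score P S p (lamp lam k (sgnb b) t) (X w) b j =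
  score P S p lam (X w) b j - (if j == k then t else 0).
Proof.
rewrite /score /lamp; case: (j == k); case: b; rewrite /sgnb; lra.
Qed.

Lemma sc_up lam k b t w j :
  score P S p (lamp lam k (sgnb b) t) (X w) (~~ b) j =
  score P S p lam (X w) (~~ b) j + (if j == k then t else 0).
Proof.
rewrite /score /lamp; case: (j == k); case: b; rewrite /sgnb /=; lra.
Qed.

Lemma dual_split lam b :
  dual_obj P X S p lam =
  E (B b) (fun w => maxK (score P S p lam (X w) b)) / pic b +
  E (B (~~ b)) (fun w => maxK (score P S p lam (X w) (~~ b))) / pic (~~ b).
Proof. by case: b => //; rewrite /dual_obj addrC. Qed.

Lemma indic_bool (A : set Omega) w (bb : bool) : (A w <-> bb) -> \1_A w = bb%:R :> R.
Proof.
case: bb => H; first by rewrite indic1 //; apply/H.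
by rewrite indic0' // => /H.
Qed.

Local Notation Tset lam c i j t :=
  [set w | 0 <= sc lam c i w - sc lam c j w /\ sc lam c i w - sc lam c j w <= t].

Lemma mTset lam c i j t : measurable (Tset lam c i j t).
Proof.
have hb : bm (fun w => sc lam c i w - sc lam c j w) by apply: bm_sub; exact: bm_sc.
by have := measurableI _ _ (mge _ 0 hb) (mle _ t hb).
Qed.

Lemma Ncnt_indic lam c t w :
  Ncnt (fun j => sc lam c j w) t =
  \sum_i \sum_(j | j != i) \1_(Tset lam c i j t) w.
Proof.
apply: eq_bigr => i _; apply: eq_bigr => j _; apply/esym/indic_bool => /=.
by split; [case => -> -> | move/andP].
Qed.

Lemma bm_Ncnt lam c t : bm (fun w => Ncnt (fun j => sc lam c j w) t).
Proof.
under eq_fun do rewrite Ncnt_indic.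
apply: bm_sum => i; apply: bm_sum => j; exact/bm_indic/mTset.
Qed.

Lemma E_Ncnt lam c t :
  E (B c) (fun w => Ncnt (fun j => sc lam c j w) t) =
  \sum_i \sum_(j | j != i) fine (P (Tset lam c i j t `&` B c)).
Proof.
under eq_Rintegral do rewrite Ncnt_indic.
rewrite Esum //; last by move=> i; apply: bm_sum => j; exact/bm_indic/mTset.
apply: eq_bigr => i _; rewrite Esum //; last by move=> j; exact/bm_indic/mTset.
by apply: eq_bigr => j _; rewrite Eindic //; exact: mTset.
Qed.

Lemma ind_eq (g : T -> bool -> 'I_K) c k w :
  (g (X w) c == k)%:R = \1_(Hk g k c) w :> R.
Proof. apply/esym/indic_bool => /=; split; first by move=> ->; exact: eqxx.
exact: eqP. Qed.

Lemma bm_ind (g : T -> bool -> 'I_K) c k : is_classifier g ->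
  bm (fun w => (g (X w) c == k)%:R : R).
Proof.
move=> hc.
have -> : (fun w => (g (X w) c == k)%:R : R) = (fun w => \1_(Hk g k c) w).
  by apply/funext => w; exact: ind_eq.
exact/bm_indic/mHk.
Qed.

Lemma E_ind (g : T -> bool -> 'I_K) c k : is_classifier g ->
  E (B c) (fun w => (g (X w) c == k)%:R : R) = qc g c k.
Proof.
move=> hc.
have -> : (fun w => (g (X w) c == k)%:R : R) = (fun w => \1_(Hk g k c) w).
  by apply/funext => w; exact: ind_eq.
rewrite Eindic //; last exact: mHk.
by rewrite /qc setIC.
Qed.

Lemma step1 (g : T -> bool -> 'I_K) lam b k t : is_classifier g ->
  (forall x c j, score P S p lam x c j <= score P S p lam x c (g x c)) ->
  (forall lam', dual_obj P X S p lam <= dual_obj P X S p lam') -> 0 < t ->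
  qc g b k / pic b <= qc g (~~ b) k / pic (~~ b) +
    (E (B b) (fun w => Ncnt (fun j => sc lam b j w) t) / pic b +
     E (B (~~ b)) (fun w => Ncnt (fun j => sc lam (~~ b) j w) t) / pic (~~ b)).
Proof.
move=> hc hg hmin t0.
have H := hmin (lamp lam k (sgnb b) t).
rewrite (dual_split lam b) (dual_split (lamp lam k (sgnb b) t) b) in H.
apply: (alg_step (E (B b) (fun w => maxK (score P S p lam (X w) b)))
                 (E (B (~~ b)) (fun w => maxK (score P S p lam (X w) (~~ b))))
                 _ _ _ _ _ _ _ t0).
apply: (le_trans H); apply: lerD; apply: ler_wpM2r;
  try by rewrite invr_ge0 ltW.
- apply: (@le_trans _ _ (E (B b) (fun w =>
      maxK (score P S p lam (X w) b) + (- t) * (g (X w) b == k)%:R +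
      t * Ncnt (fun j => sc lam b j w) t))).
    apply: Ele => //; first exact: bm_M.
      apply: bm_add; last by apply: bm_scale; exact: bm_Ncnt.
      apply: bm_add; first exact: bm_M.
      by apply: bm_scale; exact: bm_ind.
    move=> w _.
    have -> : score P S p (lamp lam k (sgnb b) t) (X w) b =
        (fun j => sc lam b j w - (if j == k then t else 0)).
      by apply/funext => j; rewrite sc_down.
    rewrite mulNr.
    have HH := (pert_down (fun j => sc lam b j w) (g (X w) b) k t (ltW t0)
             (fun j => hg (X w) b j)).
    exact: HH.
  have b1 := bm_ind g b k hc; have b2 := bm_Ncnt lam b t; have b3 := bm_M lam b.
  have hs1 := bm_scale (- t) b1; have hs2 := bm_scale t b2.
  have hs3 := bm_add _ _ b3 hs1.
  rewrite (@ED _ _ _ P _ _ _ _ hs3 hs2) // (@ED _ _ _ P _ _ _ _ b3 hs1) //.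
  by rewrite (@EZ _ _ _ P _ _ _ _ b1) // (@EZ _ _ _ P _ _ _ _ b2) // E_ind // mulNr.
- apply: (@le_trans _ _ (E (B (~~ b)) (fun w =>
      maxK (score P S p lam (X w) (~~ b)) + t * (g (X w) (~~ b) == k)%:R +
      t * Ncnt (fun j => sc lam (~~ b) j w) t))).
    apply: Ele => //; first exact: bm_M.
      apply: bm_add; last by apply: bm_scale; exact: bm_Ncnt.
      apply: bm_add; first exact: bm_M.
      by apply: bm_scale; exact: bm_ind.
    move=> w _.
    have -> : score P S p (lamp lam k (sgnb b) t) (X w) (~~ b) =
        (fun j => sc lam (~~ b) j w + (if j == k then t else 0)).
      by apply/funext => j; rewrite sc_up.
    have HH := (pert_up (fun j => sc lam (~~ b) j w) (g (X w) (~~ b)) k t (ltW t0)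
             (fun j => hg (X w) (~~ b) j)).
    exact: HH.
  have b1 := bm_ind g (~~ b) k hc; have b2 := bm_Ncnt lam (~~ b) t.
  have b3 := bm_M lam (~~ b).
  have hs1 := bm_scale t b1; have hs2 := bm_scale t b2.
  have hs3 := bm_add _ _ b3 hs1.
  rewrite (@ED _ _ _ P _ _ _ _ hs3 hs2) // (@ED _ _ _ P _ _ _ _ b3 hs1) //.
  by rewrite (@EZ _ _ _ P _ _ _ _ b1) // (@EZ _ _ _ P _ _ _ _ b2) // E_ind.
Qed.

Lemma band_prob (c : bool) (i j : 'I_K) (v : R) :
  fine (P ([set w | p i (X w) (S w) - p j (X w) (S w) <= v] `&` B c)) =
  E (B c) (fun w => \1_[set w | p i (X w) c - p j (X w) c <= v] w).
Proof.
have hb : bm (fun w => p i (X w) c - p j (X w) c) by apply: bm_sub; exact: bm_p.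
rewrite Eindic //; last exact: (mle _ v hb).
congr (fine (P _)); apply/seteqP; split => w /= [h1 h2]; split => //;
  by move: h1; rewrite h2.
Qed.

Lemma F_eq (c : bool) (i j : 'I_K) (v : R) :
  E (B c) (fun w => \1_[set w | p i (X w) c - p j (X w) c <= v] w) =
  condprob P S [set w | p i (X w) (S w) - p j (X w) (S w) <= v] c * pic c.
Proof.
rewrite -band_prob /condprob /prob divfK //.
by apply/lt0r_neq0; exact: pipos.
Qed.

Lemma tie_small lam c i j e : continuity_assumption P X S p -> i != j -> 0 < e ->
  exists2 dl, 0 < dl & forall t, 0 < t -> t < dl ->
    fine (P (Tset lam c i j t `&` B c)) / pic c <= e.
Proof.
move=> hcont ij e0.
set F := fun v => condprob P S [set w | p i (X w) (S w) - p j (X w) (S w) <= v] c.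
have pc := pipos c.
set u := sgnb c * (lam i - lam j) / pic c.
have e2 : 0 < e / 2 by lra.
have [dl0 dl00 Hd] := cont_delta F u (e / 2) (hcont i j c ij u) e2.
exists (dl0 * pic c); first exact: mulr_gt0.
move=> t t0 tdl.
set h := t / pic c.
have h0 : 0 < h by exact: divr_gt0.
have hdl : h < dl0 by rewrite /h ltr_pdivrMr.
have hu : pic c * u = sgnb c * (lam i - lam j).
  by rewrite /u mulrC divfK // lt0r_neq0.
have hh : pic c * h = t by rewrite /h mulrC divfK // lt0r_neq0.
have bP v : bm (fun w => \1_[set w | p i (X w) c - p j (X w) c <= v] w).
  apply: bm_indic; apply: mle; apply: bm_sub; exact: bm_p.
have le1 : E (B c) (fun w => \1_(Tset lam c i j t) w) <=
    E (B c) (fun w => \1_[set w | p i (X w) c - p j (X w) c <= u + h] w +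
       (-1) * \1_[set w | p i (X w) c - p j (X w) c <= u - h] w).
  apply: Ele => //; first exact/bm_indic/mTset.
    by apply: bm_add => //; exact: bm_scale.
  move=> w _.
  set D := p i (X w) c - p j (X w) c.
  have [Tw|nT] := pselect (Tset lam c i j t w).
    have [ha hb] := Tw.
    have e1 : sc lam c i w - sc lam c j w = pic c * D - sgnb c * (lam i - lam j).
      by rewrite /score /D; ring.
    rewrite e1 in ha hb.
    have d1 : D <= u + h by nra.
    have d2 : ~ (D <= u - h) by move=> d3; nra.
    rewrite (indic1 (Tset lam c i j t)) //.
    rewrite (indic0' [set w | p i (X w) c - p j (X w) c <= u - h]) // mulr0 addr0.
    by rewrite (indic1 [set w | p i (X w) c - p j (X w) c <= u + h]).
  rewrite (indic0' (Tset lam c i j t)) //.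
  have [d3|d3] := pselect (D <= u - h).
    rewrite (indic1 [set w | p i (X w) c - p j (X w) c <= u - h]) //.
    rewrite (indic1 [set w | p i (X w) c - p j (X w) c <= u + h]) /=.
      by rewrite mulr1 subrr.
    by rewrite (le_trans d3) // lerD2l; lra.
  rewrite (indic0' [set w | p i (X w) c - p j (X w) c <= u - h]) // mulr0 addr0.
rewrite ED // in le1; last by exact: bm_scale.
rewrite EZ // !F_eq in le1.
rewrite Eindic // in le1; last exact: mTset.
rewrite ler_pdivrMr //.
apply: (le_trans le1).
have A1 := Hd (u + h); have A2 := Hd (u - h).
have B1 : `|u - (u + h)| < dl0 by rewrite opprD addrA subrr sub0r normrN gtr0_norm.
have B2 : `|u - (u - h)| < dl0 by rewrite opprB addrC subrK gtr0_norm.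
have C1 := A1 B1; have C2 := A2 B2.
rewrite -/(F (u + h)) -/(F (u - h)).
move: C1 C2; rewrite !ltr_norml => /andP[C1 C1'] /andP[C2 C2'].
have : F (u + h) - F (u - h) <= e by lra.
move=> H.
have H2 : (F (u + h) - F (u - h)) * pic c <= e * pic c.
  by apply: ler_wpM2r => //; exact: ltW.
move: le1; rewrite -/(F (u + h)) -/(F (u - h)) => le1; lra.
Qed.

Lemma condprob_qc (h : T -> bool -> 'I_K) c k :
  condprob P S [set w | h (X w) (S w) = k] c = qc h c k / pic c.
Proof.
rewrite /condprob /qc /prob; congr (fine (P _) / _).
apply/seteqP; split => w /= [h1 h2].
  by split => //; rewrite -h2.
by split => //; rewrite h1.
Qed.

Lemma S0_gt0 : 0 < \sum_(i : 'I_K) \sum_(j : 'I_K) (1 : R).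
Proof.
rewrite (bigD1 i0) //= [X in 0 < X + _](bigD1 i0) //=.
have h1 : 0 <= \sum_(i < K | i != i0) (1 : R) by apply: sumr_ge0.
have h2 : 0 <= \sum_(i < K | i != i0) \sum_(j < K) (1 : R).
  by apply: sumr_ge0 => i _; exact: sumr_ge0.
lra.
Qed.

Lemma fair_le (g : T -> bool -> 'I_K) lam b k :
  continuity_assumption P X S p -> is_classifier g ->
  (forall x c j, score P S p lam x c j <= score P S p lam x c (g x c)) ->
  (forall lam', dual_obj P X S p lam <= dual_obj P X S p lam') ->
  qc g b k / pic b <= qc g (~~ b) k / pic (~~ b).
Proof.
move=> hcont hc hg hmin; apply/ler_addgt0Pr => e e0.
set S0 := \sum_(i : 'I_K) \sum_(j : 'I_K) (1 : R).
have S0p := S0_gt0.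
set e' := e / (2 * S0).
have e'0 : 0 < e' by apply: divr_gt0 => //; exact: mulr_gt0.
have Hx : forall x : bool * 'I_K * 'I_K, exists dl, 0 < dl /\
    forall t, 0 < t -> t < dl -> x.1.2 != x.2 ->
      fine (P (Tset lam x.1.1 x.1.2 x.2 t `&` B x.1.1)) / pic x.1.1 <= e'.
  move=> [[c i] j] /=; have [ij|ij] := eqVneq i j.
    by exists 1; split => // t _ _; rewrite ij eqxx.
  have [dl dl0 Hd] := tie_small lam c i j e' hcont ij e'0.
  by exists dl; split => // t t0 tdl _; exact: Hd.
have [f Hf] := choice Hx.
set m := \big[Num.min/1]_(x : bool * 'I_K * 'I_K) f x.
have m0 : 0 < m.
  by apply: lt_bigmin => // x _; have [] := Hf x.
set t := m / 2.
have t0 : 0 < t by rewrite /t; lra.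
have tx : forall x, t < f x.
  move=> x; rewrite (@lt_le_trans _ _ m) //; first by rewrite /t; lra.
  exact: bigmin_le.
have Nb : forall c, E (B c) (fun w => Ncnt (fun j => sc lam c j w) t) / pic c <= e' * S0.
  move=> c; rewrite E_Ncnt mulr_suml /S0 mulr_sumr; apply: ler_sum => i _.
  rewrite mulr_suml mulr_sumr big_mkcond /=; apply: ler_sum => j _.
  case: ifP => ji.
    rewrite mulr1; have [_ H] := Hf (c, i, j).
    by apply: H => //=; rewrite eq_sym.
  by rewrite mulr1 ltW.
apply: (le_trans (step1 g lam b k t hc hg hmin t0)).
rewrite lerD2l (@le_trans _ _ (e' * S0 + e' * S0)) //; first exact: lerD.
have E1 : e' * S0 = e / 2.
  by rewrite /e'; field; rewrite lt0r_neq0.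
rewrite E1; lra.
Qed.

Lemma V_fair (h : T -> bool -> 'I_K) lam : is_classifier h ->
  exactly_fair P X S h ->
  E (B true) (fun w => sc lam true (h (X w) true) w) / pic true +
  E (B false) (fun w => sc lam false (h (X w) false) w) / pic false =
  Qc h true + Qc h false.
Proof.
move=> hc hf; rewrite !Vc_eq //.
have e c : (pic c * Qc h c - sgnb c * \sum_k lam k * qc h c k) / pic c =
    Qc h c - sgnb c * \sum_k lam k * (qc h c k / pic c).
  rewrite mulrBl [pic c * _]mulrC -mulrA divff ?mulr1; last exact/lt0r_neq0.
  by rewrite -mulrA mulr_suml; congr (_ - _ * _); apply: eq_bigr => k _; rewrite mulrA.
rewrite !e.
have -> : \sum_k lam k * (qc h true k / pic true) = \sum_k lam k * (qc h false k / pic false).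
  by apply: eq_bigr => k _; rewrite -!condprob_qc hf.
rewrite /sgnb; lra.
Qed.

Lemma bm_sch (h : T -> bool -> 'I_K) lam c : is_classifier h ->
  bm (fun w => sc lam c (h (X w) c) w).
Proof.
move=> hc.
have -> : (fun w => sc lam c (h (X w) c) w) =
    (fun w => \sum_k \1_(Hk h k c) w * sc lam c k w).
  by apply/funext => w; rewrite sum_pick.
apply: bm_sum => k; apply: bm_indicM; [exact: mHk | exact: bm_sc].
Qed.

Lemma corollary_sec (g : T -> bool -> 'I_K) (lamstar : 'I_K -> R) :
  continuity_assumption P X S p ->
  (forall lam : 'I_K -> R, dual_obj P X S p lamstar <= dual_obj P X S p lam) ->
  is_classifier g ->
  (forall (x : T) (b : bool) (k : 'I_K),
      score P S p lamstar x b k <= score P S p lamstar x b (g x b)) ->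
  exactly_fair P X S g /\
  (forall g' : T -> bool -> 'I_K, is_classifier g' -> exactly_fair P X S g' ->
      risk P X S Y g <= risk P X S Y g').
Proof.
move=> hcont hmin hc hg.
have fair : exactly_fair P X S g.
  move=> k; rewrite !condprob_qc; apply/le_anti/andP; split.
    exact: (fair_le g lamstar true k hcont hc hg hmin).
  exact: (fair_le g lamstar false k hcont hc hg hmin).
split => // g' hc' hf'.
rewrite (risk_eq g hc) (risk_eq g' hc'); apply: lerB => //.
rewrite -(V_fair g lamstar hc fair) -(V_fair g' lamstar hc' hf').
apply: lerD; apply: ler_wpM2r; try by rewrite invr_ge0 ltW.
all: apply: Ele => //; try exact: bm_sch.
all: by move=> w _; exact: hg.
Qed.

End Main.

Theorem corollary1 (d d' : measure_display) (Omega : measurableType d)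
  (T : measurableType d') (R : realType) (P : probability Omega R) (K : nat)
  (X : Omega -> T) (S : Omega -> bool) (Y : Omega -> 'I_K)
  (p : 'I_K -> T -> bool -> R) (lamstar : 'I_K -> R) (g : T -> bool -> 'I_K) :
  measurable_fun setT X ->
  (forall b : bool, measurable [set w | S w = b]) ->
  (forall k : 'I_K, measurable [set w | Y w = k]) ->
  (forall b : bool, 0 < pi_s P S b) ->
  is_cond_prob P X S Y p ->
  continuity_assumption P X S p ->
  (forall lam : 'I_K -> R, dual_obj P X S p lamstar <= dual_obj P X S p lam) ->
  is_classifier g ->
  (forall (x : T) (b : bool) (k : 'I_K),
      score P S p lamstar x b k <= score P S p lamstar x b (g x b)) ->
  exactly_fair P X S g /\
  (forall g' : T -> bool -> 'I_K, is_classifier g' -> exactly_fair P X S g' ->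
      risk P X S Y g <= risk P X S Y g').
Proof.
move=> mX mS mY pipos hcp hcont hmin hc hg.
have [w0|no] := pselect (exists w : Omega, True); last first.
  exfalso; have := probability_setT P.
  have -> : [set: Omega] = set0.
    by apply/seteqP; split => w // _; apply: no; exists w.
  by rewrite measure0 => -[] /esym/eqP; rewrite oner_eq0.
pose w1 := proj1_sig (cid w0).
have i0 : 'I_K := g (X w1) (S w1).
exact: (corollary_sec P X S Y p mX mS mY pipos hcp i0 g lamstar hcont hmin hc hg).
Qed.
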